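(* $\displaystyle\int_0^1 R(x)\,dx=\frac{3}{7}.$
   Context: Define $\rho$ on binary words: for $b=b_1b_2\dots$, $\rho(b)$ is obtained by deleting every digit $b_n=0$ and replacing every $b_n=1$ by $0$ if $n$ is odd and by $1$ if $n$ is even. For $x\in(0,1]$ let $\beta(x)$ be the unique binary expansion of $x$ with infinitely many $1$'s. Define $R:[0,1]\to[0,1]$ by $R(0)=2/3$ and, for $x\in(0,1]$, $R(x)=\sum_{n\ge1}c_n2^{-n}$ where $c=\rho(\beta(x))$. *)

(* Defs.v *)
From HB Require Import structures.
From mathcomp Require Import all_boot all_order all_algebra.
From mathcomp Require Import all_classical all_reals all_analysis.
From Stdlib Require Import ClassicalEpsilon.
Set Implicit Arguments. Unset Strict Implicit. Unset Printing Implicit Defensive.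
Import Order.TTheory GRing.Theory Num.Theory numFieldNormedType.Exports.
Local Open Scope classical_set_scope.
Local Open Scope ring_scope.

(* Infinite binary words b = b_1 b_2 ... are functions nat -> bool; the value
   at index 0 is irrelevant (digits are indexed from 1 as in the paper). *)

Definition inf_ones (b : nat -> bool) : Prop :=
  forall N : nat, exists n : nat, (N < n)%N /\ b n.

Definition is_binexp {R : realType} (x : R) (b : nat -> bool) : Prop :=
  (fun N : nat => \sum_(1 <= n < N) (b n)%:R / 2 ^+ n) @ \oo --> x.

Definition beta {R : realType} (x : R) : nat -> bool :=
  epsilon (inhabits (fun _ : nat => false))
          (fun b => inf_ones b /\ is_binexp x b).

(* c = rho(b) for an infinite word b with infinitely many 1's: if
   p_1 < p_2 < ... enumerate the positions n >= 1 with b_n = 1 (deleting the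
   0's), then c_k = 0 if p_k is odd and c_k = 1 if p_k is even. *)
Definition rho_rel (b c : nat -> bool) : Prop :=
  exists p : nat -> nat,
    [/\ (forall k, (1 <= k)%N -> (1 <= p k)%N /\ b (p k)),
        (forall k, (1 <= k)%N -> (p k < p k.+1)%N),
        (forall n, (1 <= n)%N -> b n -> exists2 k, (1 <= k)%N & p k = n) &
        (forall k, (1 <= k)%N -> c k = ~~ odd (p k))].

Definition rho (b : nat -> bool) : nat -> bool :=
  epsilon (inhabits (fun _ : nat => false)) (rho_rel b).

Definition Rmap {R : realType} (x : R) : R :=
  if x == 0 then 2 / 3
  else limn (fun N : nat => \sum_(1 <= n < N) (rho (beta x) n)%:R / 2 ^+ n : R).

(* Main.v *)
Require Import Defs.
From HB Require Import structures.
From mathcomp Require Import all_boot all_order all_algebra.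
From mathcomp Require Import all_classical all_reals all_analysis.
From mathcomp Require Import measurable_realfun.
From mathcomp Require Import ring lra.
From Stdlib Require Import ClassicalEpsilon.
Import Order.TTheory GRing.Theory Num.Theory numFieldNormedType.Exports.
Local Open Scope classical_set_scope.
Local Open Scope ring_scope.

Section Ecov.
Variable R : realType.
Local Notation mu := (@lebesgue_measure R).

Lemma aff_cont2 (a t : R) : continuous (fun x : R => a * x + t).
Proof.
move=> x; apply: continuousD; last exact: cvg_cst.
apply: continuousM; [exact: cvg_cst | exact: cvg_id].
Qed.

Lemma aff_meas2 (a t : R) : measurable_fun setT (fun x : R => a * x + t).
Proof. apply: continuous_measurable_fun; exact: aff_cont2. Qed.

Section pf.
Variable t : R.
Definition pf : set (measurableTypeR R) -> \bar R := fun A => mu ((fun x : measurableTypeR R => (2 * x + t : measurableTypeR R)) @^-1` A).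
Let mf := aff_meas2 2 t.
Let pf0 : pf set0 = 0%E.
Proof. by rewrite /pf preimage_set0 measure0. Qed.
Let pf_ge0 A : (0 <= pf A)%E.
Proof. by apply: measure_ge0. Qed.
Let pf_sa : semi_sigma_additive pf.
Proof.
move=> F mF tF mUF; rewrite /pf preimage_bigcup.
apply: measure_semi_sigma_additive.
- by move=> n; rewrite -[X in measurable X]setTI; exact (mf measurableT _ (mF n)).
- apply/trivIsetP => /= i j _ _ ij; rewrite -preimage_setI.
  by move/trivIsetP : tF => /(_ _ _ _ _ ij) ->//; rewrite preimage_set0.
- by rewrite -preimage_bigcup -[X in measurable X]setTI; exact (mf measurableT _ mUF).
Qed.
HB.instance Definition _ := isMeasure.Build _ _ _ pf pf0 pf_ge0 pf_sa.
End pf.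

Lemma push_eq (t : R) (A : set (measurableTypeR R)) : measurable A ->
  mu A = mscale 2%:R%:nng (pf t) A.
Proof.
move=> mA.
apply: lebesgue_measure_unique => // _ [[a b]] _ <-.
change (mu `]a, b] = (2%:R : R)%:E * pf t `]a, b])%E; rewrite /pf.
have -> : (fun x : measurableTypeR R => 2 * x + t) @^-1` `]a, b] = `](a - t) / 2, (b - t) / 2]%classic.
  apply/seteqP; split => x /=; rewrite !in_itv /= => /andP[h1 h2]; apply/andP; split.
  - by rewrite ltr_pdivrMr //; lra.
  - by rewrite ler_pdivlMr //; lra.
  - by move: h1; rewrite ltr_pdivrMr //; lra.
  - by move: h2; rewrite ler_pdivlMr //; lra.
rewrite !lebesgue_measure_itv /= !lte_fin.
have -> : ((a - t) / 2 < (b - t) / 2) = (a < b).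
  by rewrite ltr_pM2r ?invr_gt0 // ltrBlDr subrK.
case: ifP => _; last by rewrite mule0.
by rewrite -EFinD -EFinM; congr EFin; field.
Qed.

Lemma aff_meas2T (t : R) : measurable_fun [set: measurableTypeR R] (fun x : measurableTypeR R => (2 * x + t : measurableTypeR R)).
Proof. exact (aff_meas2 2 t). Qed.

Lemma cov (t : R) (D : set (measurableTypeR R)) (g : measurableTypeR R -> \bar R) :
  measurable D -> measurable_fun D g -> (forall x, D x -> (0 <= g x)%E) ->
  (\int[mu]_(x in (fun x : measurableTypeR R => (2 * x + t)%R : measurableTypeR R) @^-1` D) g (2 * x + t)%R =
   (1/2 : R)%:E * \int[mu]_(x in D) g x)%E.
Proof.
move=> mD mg g0.
rewrite -(@ge0_integral_pushforward _ _ _ _ R _ (aff_meas2T t)) //; last by move=> y /set_mem; exact: g0.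
change (\int[pf t]_(y in D) g y = (1/2 : R)%:E * \int[mu]_(x in D) g x)%E.
have hk : (0 <= 1/2 :> R) by [].
rewrite (eq_measure_integral (mscale (NngNum hk) mu)); last first.
  move=> A mA _; rewrite /mscale /=.
  have := @push_eq t A mA.
  change (mu A = (2%:R : R)%:E * pf t A -> pf t A = (1/2 : R)%:E * mu A)%E.
  move=> ->; rewrite muleA -EFinM mul1r mulVf ?mul1e //.
by rewrite ge0_integral_mscale.
Qed.
End Ecov.

Set Implicit Arguments. Unset Strict Implicit. Unset Printing Implicit Defensive.

Section A.
Variable R : realType.

Definition ps (b : nat -> bool) (N : nat) : R := \sum_(1 <= n < N) (b n)%:R / 2 ^+ n.
Definition shb (b : nat -> bool) : nat -> bool := fun n => b n.+1.

Lemma ps_shift b N : ps b N.+2 = (b 1%N)%:R / 2 + ps (shb b) N.+1 / 2.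
Proof.
rewrite /ps big_ltn // expr1; congr (_ + _).
rewrite -[2%N]/(1 + 1)%N big_addn subn1 /= mulr_suml.
apply: eq_bigr => i _; rewrite /shb addn1 exprS invfM.
by rewrite mulrA mulrAC.
Qed.

Lemma ps_ge0 b N : 0 <= ps b N.
Proof. by apply: sumr_ge0 => i _; rewrite divr_ge0 // exprn_ge0. Qed.

Lemma ps_le1 b N : ps b N <= 1.
Proof.
elim: N b => [|[|N] IH] b; first by rewrite /ps big_geq.
  by rewrite /ps big_geq.
rewrite ps_shift; have := IH (shb b); have : (b 1%N)%:R <= 1 :> R by case: (b 1%N).
lra.
Qed.

Lemma ps_mono b : {homo ps b : n m / (n <= m)%N >-> n <= m}.
Proof.
move=> n m nm; case: n nm => [|n] nm; first by rewrite {1}/ps big_geq // ps_ge0.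
rewrite /ps [X in _ <= X](@big_cat_nat _ _ _ n.+1) //= lerDl.
by apply: sumr_ge0 => i _; rewrite divr_ge0 // exprn_ge0.
Qed.

Lemma ps_cvg b : cvgn (ps b).
Proof.
apply: nondecreasing_is_cvgn; first exact: ps_mono.
by exists 1 => _ [n _ <-]; exact: ps_le1.
Qed.

Lemma ps_lim b : ps b @ \oo --> limn (ps b).
Proof. exact: ps_cvg. Qed.

Lemma binexp_lim (x : R) b : is_binexp x b -> x = limn (ps b).
Proof. by move=> H; apply/esym; apply: cvg_lim. Qed.

Lemma binexp_range (x : R) b : is_binexp x b -> 0 <= x <= 1.
Proof.
move=> /binexp_lim ->; apply/andP; split.
  by apply: limr_ge; [exact: ps_cvg | apply: nearW => n; exact: ps_ge0].
by apply: limr_le; [exact: ps_cvg | apply: nearW => n; exact: ps_le1].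
Qed.

Lemma ps_recr b n : (1 <= n)%N -> ps b n.+1 = ps b n + (b n)%:R / 2 ^+ n.
Proof. by move=> hn; rewrite /ps (big_nat_recr n 1). Qed.

Lemma binexp_pos (x : R) b : inf_ones b -> is_binexp x b -> 0 < x.
Proof.
move=> /(_ 0%N) [n [hn bn]] Hx; rewrite (@binexp_lim x b Hx).
apply: (@lt_le_trans _ _ (ps b n.+1)).
  rewrite ps_recr // bn; have := ps_ge0 b n.
  have : 0 < (true%:R : R) / 2 ^+ n by rewrite mul1r invr_gt0 exprn_gt0.
  lra.
apply: limr_ge; first exact: ps_cvg.
by exists n.+1 => // N /= hN; exact: ps_mono.
Qed.


Lemma binexp_shift (x : R) b : is_binexp x b -> is_binexp (2 * x - (b 1%N)%:R) (shb b).
Proof.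
move=> H; rewrite /is_binexp -cvg_shiftS.
have -> : (fun n => ps (shb b) n.+1) = (fun n => 2 * ps b n.+2 - (b 1%N)%:R).
  by apply/funext => n; rewrite ps_shift; field.
apply: cvgB; last exact: cvg_cst.
apply: cvgM; first exact: cvg_cst.
by move: H; rewrite /is_binexp -cvg_shiftS -cvg_shiftS.
Qed.

Lemma inf_ones_shift b : inf_ones b -> inf_ones (shb b).
Proof.
move=> H N; have [[|n] [hn bn]] := H N.+1; first by [].
by exists n; split.
Qed.

Lemma first_digit (x : R) b : inf_ones b -> is_binexp x b -> b 1%N = (1/2 < x).
Proof.
move=> hi hx.
have hs := binexp_shift hx.
have /andP[_ h1] := binexp_range hs.
have h0 := binexp_pos (inf_ones_shift hi) hs.
case: (b 1%N) h1 h0 => /= h1 h0; apply/esym.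
  by apply/idP; lra.
by apply/negbTE; rewrite -leNgt; lra.
Qed.

Definition dig (y : R) : bool := 1/2 < y.
Definition sig (y : R) : R := 2 * y - (dig y)%:R.

Lemma digits_unique n : forall (x : R) b, inf_ones b -> is_binexp x b ->
  b n.+1 = dig (iter n sig x).
Proof.
elim: n => [|n IH] x b hi hx; first exact: first_digit.
have := IH _ _ (inf_ones_shift hi) (binexp_shift hx).
by rewrite /shb => ->; rewrite iterSr /sig /dig -(first_digit hi hx).
Qed.

Lemma sig_in (y : R) : 0 < y <= 1 -> 0 < sig y <= 1.
Proof.
rewrite /sig; case hd: (dig y) => /= /andP[h1 h2]; move: hd; rewrite /dig => hd.
  by apply/andP; split; lra.
by move: hd => /negbT; rewrite -leNgt => hd; apply/andP; split; lra.
Qed.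

Lemma iter_sig_in n (y : R) : 0 < y <= 1 -> 0 < iter n sig y <= 1.
Proof. by move=> h; elim: n => [|n IH] //=; exact: sig_in. Qed.

Lemma pow2_big (y : R) : exists j, y < 2 ^+ j.
Proof.
have [j hj] : exists j : nat, y < j%:R.
  exists (Num.truncn `|y|).+1; apply: (le_lt_trans (ler_norm y)).
  exact: truncnS_gt.
exists j; apply: (lt_trans hj).
by rewrite -natrX ltr_nat ltn_expl.
Qed.

Lemma orbit_hi (y : R) : 0 < y <= 1 -> exists j, dig (iter j sig y).
Proof.
move=> hy; apply/not_existsP => H.
have E j : iter j sig y = 2 ^+ j * y.
  elim: j => [|j IH]; first by rewrite mul1r.
  by rewrite iterS {1}/sig (negbTE (introN idP (H j))) IH exprS /= subr0 mulrA.
have [j hj] := pow2_big (1 / y).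
apply: (H j); rewrite /dig E.
move: hy => /andP[y0 _].
have : 1 < 2 ^+ j * y by rewrite -ltr_pdivrMr // mul1r -[y^-1]mul1r.
lra.
Qed.

Definition cdig (x : R) (n : nat) : bool := if n is k.+1 then dig (iter k sig x) else false.

Lemma ps_cdig (x : R) N : ps (cdig x) N.+1 = x - iter N sig x / 2 ^+ N.
Proof.
elim: N => [|N IH]; first by rewrite /ps big_geq // expr0 divr1 subrr.
rewrite ps_recr // IH /=; set z := iter N sig x; rewrite /sig exprS.
by field; rewrite expf_neq0.
Qed.

Lemma cdig_binexp (x : R) : 0 < x <= 1 -> is_binexp x (cdig x).
Proof.
move=> hx; rewrite /is_binexp -cvg_shiftS.
have -> : (fun n => ps (cdig x) n.+1) = (fun n => x - iter n sig x / 2 ^+ n).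
  by apply/funext => n; rewrite ps_cdig.
suff : (fun n => x - iter n sig x / 2 ^+ n) @ \oo --> x - 0 by rewrite subr0.
apply: cvgB; first exact: cvg_cst.
apply/cvgrPdist_le => e e0.
have [j hj] := pow2_big (1 / e).
exists j => // n /= hn.
rewrite sub0r normrN ger0_norm; last first.
  have /andP[h1 _] := iter_sig_in n hx.
  by rewrite divr_ge0 // ?exprn_ge0 // ltW.
have /andP[h1 h2] := iter_sig_in n hx.
have h2n : 2 ^+ j <= 2 ^+ n :> R by rewrite ler_eXn2l ?ltr1n.
have p0 : 0 < 2 ^+ j :> R by rewrite exprn_gt0.
rewrite ler_pdivrMr ?exprn_gt0 //.
apply: (le_trans h2); apply: (le_trans _ (ler_wpM2l (ltW e0) h2n)).
by move: hj; rewrite ltr_pdivrMr // => /ltW; rewrite mulrC.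
Qed.

Lemma cdig_inf (x : R) : 0 < x <= 1 -> inf_ones (cdig x).
Proof.
move=> hx N; have [j hj] := orbit_hi (iter_sig_in N hx).
exists (j + N).+1; split; first by rewrite ltnS leq_addl.
by rewrite /= iterD.
Qed.

Lemma beta_spec (x : R) : 0 < x <= 1 -> inf_ones (beta x) /\ is_binexp x (beta x).
Proof.
move=> hx; rewrite /beta; apply: (@epsilon_spec _ _ (fun b => inf_ones b /\ is_binexp x b)).
by exists (cdig x); split; [exact: cdig_inf | exact: cdig_binexp].
Qed.

Lemma beta_dig (x : R) n : 0 < x <= 1 -> beta x n.+1 = dig (iter n sig x).
Proof. by move=> /beta_spec [h1 h2]; exact: digits_unique. Qed.

End A.

Definition enum (b : nat -> bool) (p : nat -> nat) : Prop :=
  [/\ forall k, (1 <= k)%N -> (1 <= p k)%N /\ b (p k),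
      forall k, (1 <= k)%N -> (p k < p k.+1)%N &
      forall n, (1 <= n)%N -> b n -> exists2 k, (1 <= k)%N & p k = n].

Lemma enum_mono b p : enum b p -> forall i j, (1 <= i)%N -> (i < j)%N -> (p i < p j)%N.
Proof.
move=> [_ h2 _] i j hi; elim: j => [//|j IH].
rewrite ltnS leq_eqVlt => /orP[/eqP e | hij]; first by rewrite -e; exact: h2.
apply: (ltn_trans (IH hij)); apply: h2; exact: (leq_trans hi (ltnW hij)).
Qed.

Lemma enum_monoW b p : enum b p -> forall i j, (1 <= i)%N -> (i <= j)%N -> (p i <= p j)%N.
Proof.
move=> he i j hi; rewrite leq_eqVlt => /orP[/eqP -> //| hij].
exact/ltnW/(enum_mono he).
Qed.

Lemma enum_1 b p q : enum b p -> enum b q -> (p 1%N <= q 1%N)%N.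
Proof.
move=> hp hq; have [h1 _ _] := hq; have [q1 qb] := h1 1%N (leqnn 1).
have [_ _ h3] := hp; have [j hj <-] := h3 _ q1 qb.
exact: (enum_monoW hp).
Qed.

Lemma enum_step b p q k : enum b p -> enum b q -> (1 <= k)%N -> p k = q k ->
  (p k.+1 <= q k.+1)%N.
Proof.
move=> hp hq hk hpq.
have [h1 h2 _] := hq; have [q1 qb] := h1 k.+1 isT.
have [_ _ h3] := hp; have [j hj hj'] := h3 _ q1 qb.
have hlt : (p k < p j)%N by rewrite hj' hpq; exact: h2.
have kj : (k < j)%N.
  by rewrite ltnNge; apply/negP => jk; move: hlt; rewrite ltnNge (enum_monoW hp).
by rewrite -hj'; apply: (enum_monoW hp).
Qed.

Lemma enum_uniq b p q : enum b p -> enum b q -> forall k, (1 <= k)%N -> p k = q k.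
Proof.
move=> hp hq; elim=> [//|k IH] _.
case: k IH => [|k] IH.
  by apply/eqP; rewrite eqn_leq !(enum_1 hp hq) (enum_1 hq hp).
have e := IH isT.
by apply/eqP; rewrite eqn_leq (enum_step hp hq) // (enum_step hq hp).
Qed.

Lemma enum_exists b : inf_ones b -> exists p, enum b p.
Proof.
move=> hi.
have H m : exists n, (m < n)%N && b n.
  by have [n [h1 h2]] := hi m; exists n; rewrite h1 h2.
pose nxt m := ex_minn (H m).
have nxtP m : (m < nxt m)%N && b (nxt m).
  by rewrite /nxt; case: ex_minnP.
have nxt_min m n : (m < n)%N -> b n -> (nxt m <= n)%N.
  by move=> h1 h2; rewrite /nxt; case: ex_minnP => k _; apply; rewrite h1 h2.
pose p k := iter k nxt 0%N.
have pS k : p k.+1 = nxt (p k) by [].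
have plt k : (p k < p k.+1)%N by rewrite pS; case/andP: (nxtP (p k)).
have claim n : exists k, (p k < n.+1 <= p k.+1)%N.
  elim: n => [|n [k /andP[h1 h2]]]; first by exists 0%N; rewrite /= (plt 0%N).
  case: (ltnP n.+1 (p k.+1)) => h3; first by exists k; rewrite h3 (ltn_trans h1).
  have e : p k.+1 = n.+1 by apply/eqP; rewrite eqn_leq h3 h2.
  by exists k.+1; rewrite -e ltnS leqnn /= (plt k.+1).
exists p; split.
- case=> [//|k] _; rewrite pS; case/andP: (nxtP (p k)) => h1 h2; split=> //.
  exact: (leq_ltn_trans (leq0n _) h1).
- by move=> k _; exact: plt.
- case=> [//|n] _ bn; have [k /andP[h1 h2]] := claim n.
  exists k.+1 => //; apply/eqP; rewrite eqn_leq h2 andbT pS.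
  exact: nxt_min.
Qed.

Lemma rho_spec b : inf_ones b ->
  exists2 p, enum b p & forall k, (1 <= k)%N -> rho b k = ~~ odd (p k).
Proof.
move=> hi; have [p hp] := enum_exists hi.
have : rho_rel b (rho b).
  rewrite /rho; apply: (@epsilon_spec _ _ (rho_rel b)).
  by exists (fun k => ~~ odd (p k)); case: hp => h1 h2 h3; exists p; split.
by case=> q [h1 h2 h3 h4]; exists q => //; split.
Qed.

Lemma rho_val b p : inf_ones b -> enum b p -> forall k, (1 <= k)%N -> rho b k = ~~ odd (p k).
Proof.
move=> hi hp k hk; have [q hq ->] := rho_spec hi; last by [].
by rewrite (enum_uniq hq hp).
Qed.

Lemma enum_ext b b' p : (forall n, (1 <= n)%N -> b n = b' n) -> enum b p -> enum b' p.
Proof.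
move=> e [h1 h2 h3]; split=> //.
- by move=> k hk; have [h4 h5] := h1 k hk; split=> //; rewrite -e.
- by move=> n hn bn; apply: h3; rewrite // e.
Qed.

Lemma inf_ones_ext b b' : (forall n, (1 <= n)%N -> b n = b' n) -> inf_ones b -> inf_ones b'.
Proof.
move=> e hi N; have [n [h1 h2]] := hi N; exists n; split=> //.
by rewrite -e // (leq_ltn_trans (leq0n _) h1).
Qed.

Lemma enum_ge2 b p k : enum b p -> b 1%N = false -> (1 <= k)%N -> (2 <= p k)%N.
Proof.
move=> [h1 _ _] b1 hk; have [h3 h4] := h1 k hk.
by move: h3; rewrite leq_eqVlt => /orP[/eqP e|//]; move: h4; rewrite -e b1.
Qed.

Lemma enum_sh0 b p : enum b p -> b 1%N = false -> enum (shb b) (fun k => (p k).-1).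
Proof.
move=> hp b1; have [h1 h2 h3] := hp; split.
- move=> k hk; have h := enum_ge2 hp b1 hk; have [_ h4] := h1 k hk.
  by rewrite /shb prednK ?(ltn_trans _ h) //; split=> //; rewrite -ltnS prednK // (ltn_trans _ h).
- move=> k hk; have h := enum_ge2 hp b1 hk; have h' := enum_ge2 hp b1 (isT : (1 <= k.+1)%N).
  by rewrite -ltnS prednK ?(ltn_trans _ h) //; have := h2 k hk; case: (p k.+1) h'.
- move=> n hn bn; have [k hk e] := h3 n.+1 isT bn; exists k => //; by rewrite e.
Qed.

Lemma enum_sh1 b p : enum b p -> b 1%N = true ->
  p 1%N = 1%N /\ enum (shb b) (fun k => (p k.+1).-1).
Proof.
move=> hp b1; have [h1 h2 h3] := hp.
have p1 : p 1%N = 1%N.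
  have [j hj e] := h3 1%N isT b1; have [h4 _] := h1 1%N isT.
  have := enum_monoW hp (isT : (1 <= 1)%N) hj; rewrite e => h5.
  by apply/eqP; rewrite eqn_leq h4 h5.
have ge2 k : (1 <= k)%N -> (2 <= p k.+1)%N.
  by move=> hk; rewrite -p1 (enum_mono hp).
split=> //; split.
- move=> k hk; have [_ h4] := h1 k.+1 isT; have h := ge2 k hk.
  by rewrite /shb prednK ?(ltn_trans _ h) //; split=> //; rewrite -ltnS prednK // (ltn_trans _ h).
- move=> k hk; have h := ge2 k hk; have h' := ge2 k.+1 isT.
  by rewrite -ltnS prednK ?(ltn_trans _ h) //; have := h2 k.+1 isT; case: (p k.+2) h'.
- move=> n hn bn; have [k hk e] := h3 n.+1 isT bn.
  case: k hk e => [//|[|k]] _ e; first by move: hn; rewrite -ltnS -e p1.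
  by exists k.+1 => //; rewrite e.
Qed.

Section C.
Variable R : realType.

Lemma Rmap_nz (x : R) : x != 0 -> Rmap x = limn (ps R (rho (beta x))).
Proof. by move=> hx; rewrite /Rmap (negbTE hx). Qed.

Lemma limn_ps_range c : 0 <= limn (ps R c) <= 1.
Proof.
apply/andP; split.
  by apply: limr_ge; [exact: ps_cvg | apply: nearW => n; exact: ps_ge0].
by apply: limr_le; [exact: ps_cvg | apply: nearW => n; exact: ps_le1].
Qed.

Lemma R_range (x : R) : 0 <= Rmap x <= 1.
Proof.
have [->|hx] := eqVneq x 0; last by rewrite Rmap_nz //; exact: limn_ps_range.
by rewrite /Rmap eqxx; apply/andP; split; lra.
Qed.

Lemma ps_neg c c' N : (forall k, (1 <= k)%N -> c k = ~~ c' k) ->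
  ps R c N = ps R (fun _ => true) N - ps R c' N.
Proof.
move=> e; rewrite /ps -sumrB; apply: eq_big_nat => n /andP[hn _].
by rewrite (e n hn); case: (c' n) => /=; rewrite ?mul0r ?subrr ?subr0.
Qed.

Lemma ps_true_cvg : ps R (fun _ => true) @ \oo --> (1 : R).
Proof.
have h1 : 0 < (1 : R) <= 1 by rewrite ltr01 lexx.
have H := cdig_binexp h1.
have -> : ps R (fun _ => true) = ps R (cdig (1:R)); first last.
  exact H.
apply/funext => N; apply: eq_big_nat => n /andP[hn _].
case: n hn => [//|n] _ /=.
have -> : iter n (sig (R:=R)) 1 = 1.
  elim: n => [//|n IH]; rewrite iterS IH /sig /dig.
  have -> : (1 / 2 < 1 :> R) = true by apply/idP; lra.
  by rewrite /=; ring.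
rewrite /dig; have -> : (1 / 2 < 1 :> R) = true by apply/idP; lra.
by [].
Qed.



Lemma R_lo (x : R) : 0 < x <= 1/2 -> Rmap x = 1 - Rmap (2 * x).
Proof.
move=> /andP[x0 x1].
have hx : 0 < x <= 1 by apply/andP; split; lra.
have hy : 0 < 2 * x <= 1 by apply/andP; split; lra.
have [hi hb] := beta_spec hx.
have [hi' hb'] := beta_spec hy.
have dx : dig x = false by rewrite /dig; apply/negbTE; rewrite -leNgt.
have sx : sig x = 2 * x by rewrite /sig dx subr0.
have b1 : beta x 1%N = false by rewrite (beta_dig 0 hx).
have ext : forall n, (1 <= n)%N -> shb (beta x) n = beta (2 * x) n.
  case=> [//|m] _; rewrite /shb (beta_dig m.+1 hx) (beta_dig m hy).
  by rewrite iterSr sx.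
have [p hp] := enum_exists hi.
have hp' := enum_ext ext (enum_sh0 hp b1).
have e : forall k, (1 <= k)%N -> rho (beta x) k = ~~ rho (beta (2 * x)) k.
  move=> k hk; rewrite (rho_val hi hp hk) (rho_val hi' hp' hk).
  have := enum_ge2 hp b1 hk; case: (p k) => [//|m] _ /=.
  by rewrite negbK.
rewrite Rmap_nz ?gt_eqF // Rmap_nz ?gt_eqF //; last by lra.
have -> : ps R (rho (beta x)) = (fun N => ps R (fun _ => true) N - ps R (rho (beta (2 * x))) N).
  by apply/funext => N; exact: ps_neg.
apply: cvg_lim => //; apply: cvgB; first exact: ps_true_cvg.
exact: ps_lim.
Qed.

Lemma R_hi (x : R) : 1/2 < x <= 1 -> Rmap x = (1 - Rmap (2 * x - 1)) / 2.
Proof.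
move=> /andP[x0 x1].
have hx : 0 < x <= 1 by apply/andP; split; lra.
have hy : 0 < 2 * x - 1 <= 1 by apply/andP; split; lra.
have [hi hb] := beta_spec hx.
have [hi' hb'] := beta_spec hy.
have dx : dig x = true by [].
have sx : sig x = 2 * x - 1 by rewrite /sig dx.
have b1 : beta x 1%N = true by rewrite (beta_dig 0 hx).
have ext : forall n, (1 <= n)%N -> shb (beta x) n = beta (2 * x - 1) n.
  case=> [//|m] _; rewrite /shb (beta_dig m.+1 hx) (beta_dig m hy).
  by rewrite iterSr sx.
have [p hp] := enum_exists hi.
have [p1 hsh] := enum_sh1 hp b1.
have hp' := enum_ext ext hsh.
have r1 : rho (beta x) 1%N = false by rewrite (rho_val hi hp) // p1.
have e : forall k, (1 <= k)%N -> shb (rho (beta x)) k = ~~ rho (beta (2 * x - 1)) k.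
  move=> k hk; rewrite /shb (rho_val hi hp) // (rho_val hi' hp' hk).
  have : (2 <= p k.+1)%N by rewrite -p1 (enum_mono hp).
  by case: (p k.+1) => [//|m] _ /=; rewrite negbK.
rewrite Rmap_nz ?gt_eqF //; last by lra.
rewrite Rmap_nz ?gt_eqF //; last by lra.
apply: cvg_lim => //.
rewrite -cvg_shiftS -cvg_shiftS.
have -> : (fun n => ps R (rho (beta x)) n.+2) =
   (fun n => (ps R (fun _ => true) n.+1 - ps R (rho (beta (2 * x - 1))) n.+1) / 2).
  apply/funext => n /=; rewrite ps_shift r1 (ps_neg _ e) /=.
  by rewrite mul0r add0r.
apply: cvgM; last exact: cvg_cst.
apply: cvgB.
  by rewrite cvg_shiftS; exact: ps_true_cvg.
by rewrite cvg_shiftS; exact: ps_lim.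
Qed.

End C.

Section D.
Variable R : realType.

Definition Tf (f : R -> R) (x : R) : R :=
  if x == 0 then 2/3 else if x <= 1/2 then 1 - f (2 * x) else (1 - f (2 * x - 1)) / 2.
Definition fn n := iter n Tf (fun _ => 2/3).

Lemma aff_cont (a t : R) : continuous (fun x : R => a * x + t).
Proof.
move=> x; apply: continuousD; last exact: cvg_cst.
apply: continuousM; [exact: cvg_cst | exact: cvg_id].
Qed.

Lemma aff_meas (a t : R) : measurable_fun setT (fun x : R => a * x + t).
Proof. apply: continuous_measurable_fun; exact: aff_cont. Qed.

Lemma fn_meas n : measurable_fun setT (fn n).
Proof.
elim: n => [|n IH]; first exact: measurable_cst.
rewrite /fn iterS -/(fn n) /Tf.
apply: measurable_fun_ifT.
- apply: (measurable_fun_bool true); rewrite setTI.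
  have -> : (fun x : R => x == 0) @^-1` [set true] = [set 0].
    by apply/seteqP; split => x /=; [move/eqP | move=> ->; rewrite eqxx].
  exact: (@measurable_set1 R 0).
- exact: measurable_cst.
apply: measurable_fun_ifT.
- apply: (measurable_fun_bool true); rewrite setTI.
  have -> : (fun x : R => x <= 1/2) @^-1` [set true] = `]-oo, 1/2]%classic.
    by apply/seteqP; split => x /=; rewrite in_itv.
  exact: measurable_itv.
- apply: measurable_funB; first exact: measurable_cst.
  have -> : (fun x => fn n (2 * x)) = fn n \o (fun x : R => 2 * x + 0).
    by apply/funext => x /=; rewrite addr0.
  apply: measurableT_comp => //; exact: aff_meas.
- apply: measurable_funM; last exact: measurable_cst.
  apply: measurable_funB; first exact: measurable_cst.
  apply: measurableT_comp => //; exact: aff_meas.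
Qed.


Fixpoint W (n : nat) (x : R) : R :=
  if n is m.+1 then (if dig x then 1/2 else 1) * W m ((@sig R) x) else 1.

Lemma W_range n x : 0 <= W n x <= 1.
Proof.
elim: n x => [|n IH] x /=; first by rewrite ler01 lexx.
have /andP[h1 h2] := IH ((@sig R) x).
by case: (dig x); apply/andP; split; nra.
Qed.

Lemma W_split a b x : W (a + b) x = W a x * W b (iter a (@sig R) x).
Proof.
elim: a x => [|a IH] x /=; first by rewrite mul1r.
by rewrite IH -iterSr mulrA.
Qed.

Lemma W_mono n m x : (n <= m)%N -> W m x <= W n x.
Proof.
move=> nm; rewrite -(subnKC nm) W_split.
have /andP[h1 h2] := W_range n x.
have /andP[h3 h4] := W_range (m - n) (iter n (@sig R) x).
nra.
Qed.

Lemma W_small m (x : R) : 0 < x <= 1 -> exists n, W n x <= (1/2) ^+ m.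
Proof.
elim: m x => [|m IH] x hx.
  by exists 0%N; rewrite expr0.
have [j hj] := orbit_hi hx.
have hy := iter_sig_in j.+1 hx.
have [n hn] := IH _ hy.
exists (j + n.+1)%N; rewrite W_split /= hj -iterS.
have /andP[h1 h2] := W_range j x.
have /andP[h3 h4] := W_range n (iter j.+1 (@sig R) x).
have h5 : 0 <= (1/2 : R) ^+ m by rewrite exprn_ge0.
rewrite exprS; nra.
Qed.

Lemma fn_err n (x : R) : 0 < x <= 1 -> `|fn n x - Rmap x| <= W n x.
Proof.
elim: n x => [|n IH] x hx.
  have /andP[h1 h2] := R_range x.
  by rewrite /= ler_norml; apply/andP; split; lra.
have x0 : x != 0 by move: hx => /andP[h _]; rewrite gt_eqF.
rewrite /fn iterS -/(fn n) /Tf (negbTE x0) /=.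
case hd: (dig x).
- move: hd; rewrite /dig => hd.
  have hx' : 1/2 < x <= 1 by move: hx => /andP[_ h]; rewrite hd h.
  rewrite (_ : (x <= 1/2) = false); last by rewrite leNgt hd.
  rewrite (R_hi hx').
  have hy : 0 < (@sig R) x <= 1 by exact: sig_in.
  have e : (@sig R) x = 2 * x - 1 by rewrite /sig /dig hd.
  have := IH _ hy; rewrite e !ler_norml => /andP[h1 h2].
  by apply/andP; split; lra.
- move: hd; rewrite /dig => /negbT; rewrite -leNgt => hd.
  have hx' : 0 < x <= 1/2 by move: hx => /andP[h _]; rewrite hd h.
  rewrite hd (R_lo hx').
  have hy : 0 < (@sig R) x <= 1 by exact: sig_in.
  have e : (@sig R) x = 2 * x by rewrite /sig /dig ltNge hd /= subr0.
  have := IH _ hy; rewrite e !ler_norml => /andP[h1 h2].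
  by apply/andP; split; lra.
Qed.

Lemma fn_cvg (x : R) : 0 <= x <= 1 -> (fun n => fn n x) @ \oo --> Rmap x.
Proof.
move=> /andP[x0 x1].
have [->|xn0] := eqVneq x 0.
  have -> : (fun n => fn n 0) = (fun _ => Rmap (0 : R)).
    by apply/funext => -[|n]; rewrite /Rmap eqxx // /fn iterS /Tf eqxx.
  exact: cvg_cst.
have hx : 0 < x <= 1 by rewrite x1 andbT lt_neqAle eq_sym xn0 x0.
apply/cvgrPdist_le => e e0.
have [j hj] := pow2_big (1 / e).
have [n0 hn0] := W_small j hx.
exists n0 => // n /= hn.
rewrite distrC; apply: (le_trans (fn_err n hx)).
apply: (le_trans (W_mono x hn)); apply: (le_trans hn0).
rewrite expr_div_n expr1n.
rewrite ler_pdivrMr ?exprn_gt0 //.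
by move: hj; rewrite ltr_pdivrMr // => /ltW; rewrite mulrC.
Qed.

Lemma Rmap_meas : measurable_fun (`[0%R, 1%R] : set R) (@Rmap R).
Proof.
apply: (measurable_fun_cvg (h := fn)).
  move=> m; apply: measurable_funTS; exact: fn_meas.
move=> x /=; rewrite in_itv /= => hx; exact: fn_cvg.
Qed.

End D.

Section Fsec.
Variable R : realType.
Local Notation mu := (@lebesgue_measure R).
Local Notation T := (measurableTypeR R).

Lemma Rmeas01 : measurable_fun (`[0%R, 1%R] : set T) (fun x : T => (Rmap (x : R))%:E).
Proof.
have h : measurable_fun (`[0%R, 1%R] : set R) (EFin \o (@Rmap R)).
  by apply/measurable_EFinP; exact: Rmap_meas.
exact h.
Qed.

Lemma Gmeas01 (c : R) : measurable_fun (`[0%R, 1%R] : set T) (fun x : T => ((1 - Rmap (x : R)) * c)%:E).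
Proof.
have h : measurable_fun (`[0%R, 1%R] : set R) (EFin \o (fun x => (1 - Rmap x) * c)).
  apply/measurable_EFinP; apply: measurable_funM; last exact: measurable_cst.
  by apply: measurable_funB; [exact: measurable_cst | exact: Rmap_meas].
exact h.
Qed.

Lemma mT (i : interval R) : measurable ([set` i] : set T).
Proof. exact (measurable_itv i). Qed.

Lemma sub01 (a b : R) : 0 <= a -> b <= 1 -> (`]a, b] : set T) `<=` `[0%R, 1%R].
Proof.
move=> a0 b1 x /=; rewrite !in_itv /= => /andP[h1 h2].
by apply/andP; split; lra.
Qed.

Lemma fin_alg (K : \bar R) : (0 <= K)%E ->
  (K + ((1/2 : R)%:E * K + (1/2 : R)%:E * ((1/2 : R)%:E * K)) = 1%:E)%E ->
  ((1/2 : R)%:E * K + (1/2 : R)%:E * ((1/2 : R)%:E * K) = (3/7 : R)%:E)%E.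
Proof.
case: K => [k| |] //= _.
  rewrite -!EFinM -!EFinD => -[h]; congr EFin; lra.
by rewrite gt0_muley ?gt0_muley ?lte_fin.
Qed.

Lemma main_int : (\int[mu]_(x in `[0%R, 1%R]) (Rmap x)%:E = (3 / 7 : R)%:E)%E.
Proof.
have mF (a b : R) : 0 <= a -> b <= 1 -> measurable_fun (`]a, b] : set T) (fun x : T => (Rmap (x : R))%:E).
  by move=> a0 b1; apply: (measurable_funS (mT _) (sub01 a0 b1)); exact: Rmeas01.
have mG (c a b : R) : 0 <= a -> b <= 1 -> measurable_fun (`]a, b] : set T) (fun x : T => ((1 - Rmap (x : R)) * c)%:E).
  by move=> a0 b1; apply: (measurable_funS (mT _) (sub01 a0 b1)); exact: Gmeas01.
rewrite -integral_itv_obnd_cbnd; last exact: mF.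
have F0 (x : T) : (0 <= (Rmap (x : R))%:E)%E.
  by rewrite lee_fin; have /andP[] := R_range (x : R).
have G0 (c : R) (x : T) : 0 <= c -> (0 <= ((1 - Rmap (x : R)) * c)%:E)%E.
  move=> c0; rewrite lee_fin; apply: mulr_ge0 => //.
  by have /andP[_ h] := R_range (x : R); lra.
have U : (`]0%R, 1%R]%classic : set T) = `]0%R, 1/2]%classic `|` `]1/2, 1%R]%classic.
  apply/seteqP; split => x /=; rewrite !in_itv /=.
    move=> /andP[h1 h2]; have [h|h] : x <= 1/2 \/ 1/2 < x by case: leP; [left|right].
      by left; rewrite /= ?in_itv /=; apply/andP; split; lra.
    by right; rewrite /= ?in_itv /=; apply/andP; split; lra.
  by case; rewrite /= ?in_itv /= => /andP[h1 h2]; apply/andP; split; lra.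
have hI : (\int[mu]_(x in `]0%R, 1%R]) (Rmap x)%:E =
    \int[mu]_(x in `]0%R, (1/2)%R]) (Rmap x)%:E + \int[mu]_(x in `](1/2)%R, 1%R]) (Rmap x)%:E)%E.
  rewrite U ge0_integral_setU //; first last.
  - rewrite disj_set2E; apply/eqP; apply/seteqP; split => x //=.
    by rewrite !in_itv /= => -[/andP[h1 h2] /andP[h3 h4]]; move: (lt_le_trans h3 h2); rewrite ltxx.
  - apply: (measurable_funS (mT `]0%R, 1%R]) _ (mF 0 1 _ _)) => //.
    move=> x [] /=; rewrite !in_itv /= => /andP[h1 h2]; apply/andP; split; lra.
have J1 : (\int[mu]_(x in `]0%R, (1/2)%R]) (Rmap x)%:E =
    (1/2 : R)%:E * \int[mu]_(x in `]0%R, 1%R]) ((1 - Rmap x) * 1)%:E)%E.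
  transitivity (\int[mu]_(x in (fun x : T => (2 * x + 0)%R : T) @^-1` `]0%R, 1%R])
     ((1 - Rmap (2 * x + 0)%R) * 1)%:E)%E; last first.
    apply: (@cov R 0 `]0%R, 1%R] (fun y : T => ((1 - Rmap (y : R)) * 1)%:E));
      [exact: mT | exact: mG | by move=> x _; exact: G0].
  rewrite (_ : (fun x : T => (2 * x + 0)%R : T) @^-1` `]0%R, 1%R] = `]0%R, (1/2)%R]%classic); last first.
    apply/seteqP; split => x /=; rewrite !in_itv /= => /andP[h1 h2]; apply/andP; split; lra.
  apply: eq_integral => x; rewrite inE /= in_itv /= => hx.
  by rewrite addr0 mulr1 R_lo.
have J2 : (\int[mu]_(x in `](1/2)%R, 1%R]) (Rmap x)%:E =
    (1/2 : R)%:E * \int[mu]_(x in `]0%R, 1%R]) ((1 - Rmap x) * (1/2))%:E)%E.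
  transitivity (\int[mu]_(x in (fun x : T => (2 * x + (-1))%R : T) @^-1` `]0%R, 1%R])
     ((1 - Rmap (2 * x + (-1))%R) * (1/2))%:E)%E; last first.
    apply: (@cov R (-1) `]0%R, 1%R] (fun y : T => ((1 - Rmap (y : R)) * (1/2))%:E));
      [exact: mT | exact: mG | by move=> x _; exact: G0].
  rewrite (_ : (fun x : T => (2 * x + (-1))%R : T) @^-1` `]0%R, 1%R] = `](1/2)%R, 1%R]%classic); last first.
    apply/seteqP; split => x /=; rewrite !in_itv /= => /andP[h1 h2]; apply/andP; split; lra.
  apply: eq_integral => x; rewrite inE /= in_itv /= => hx.
  by rewrite R_hi // mul1r.
have hsum : (\int[mu]_(x in `]0%R, 1%R]) ((1 - Rmap x) * 1)%:E +
             \int[mu]_(x in `]0%R, 1%R]) (Rmap x)%:E = 1%:E)%E.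
  rewrite -ge0_integralD //; first last;
    try by [exact: mF | exact: mG | move=> x _; exact: F0 | move=> x _; exact: G0].
  rewrite (eq_integral (fun _ => 1%:E)); last first.
    by move=> x _; rewrite -EFinD mulr1 subrK.
  rewrite integral_cst; last exact: mT.
  rewrite mul1e; have := @lebesgue_measure_itv R `]0%R, 1%R]; rewrite /= lte_fin ltr01 oppr0 adde0 => h; exact h.
have K0 : (0 <= \int[mu]_(x in `]0%R, 1%R]) ((1 - Rmap x) * 1)%:E)%E.
  by apply: integral_ge0 => x _; exact: G0.
have I0 : (0 <= \int[mu]_(x in `]0%R, 1%R]) (Rmap x)%:E)%E.
  by apply: integral_ge0 => x _; exact: F0.
have hZ : (\int[mu]_(x in `]0%R, 1%R]) ((1 - Rmap x) * (1/2))%:E =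
    (1/2 : R)%:E * \int[mu]_(x in `]0%R, 1%R]) ((1 - Rmap x) * 1)%:E)%E.
  transitivity (\int[mu]_(x in `]0%R, 1%R]) ((1/2 : R)%:E * ((1 - Rmap x) * 1)%:E))%E.
    by apply: eq_integral => x _; rewrite -EFinM mulr1 mulrC.
  apply: ge0_integralZl_EFin => //; try by [exact: mT | move=> x _; exact: G0 | exact: mG].
rewrite hI J1 J2 hZ.
rewrite hI J1 J2 hZ in hsum.
exact: fin_alg K0 hsum.
Qed.


End Fsec.


Unset Implicit Arguments. Set Strict Implicit.

Section lebR.
Variable R : realType.
Definition lebR : set R -> \bar R := @lebesgue_measure R.
Let lebR0 : lebR set0 = 0%E.
Proof. exact: (@measure0 _ _ _ (@lebesgue_measure R)). Qed.
Let lebR_ge0 (A : set R) : (0 <= lebR A)%E.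
Proof. exact: (@measure_ge0 _ _ _ (@lebesgue_measure R)). Qed.
Let lebR_sa : semi_sigma_additive lebR.
Proof. exact (@measure_semi_sigma_additive _ _ _ (@lebesgue_measure R)). Qed.
HB.instance Definition _ := isMeasure.Build _ R R lebR lebR0 lebR_ge0 lebR_sa.
End lebR.

Theorem proposition4p4 (R : realType) :
  (lebesgue_measure : set R -> \bar R).-integrable `[0%R, 1%R] (EFin \o (@Rmap R)) /\
  (\int[lebesgue_measure]_(x in `[0%R, 1%R]) (Rmap x)%:E = (3 / 7 : R)%:E)%E.
Proof.
split; last exact: main_int.
have h : (lebR R).-integrable `[0%R, 1%R] (EFin \o (@Rmap R)).
  apply: measurable_bounded_integrable.
  - exact: measurable_itv.
  - change ((@lebesgue_measure R `[0%R, 1%R]%classic) < +oo)%E.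
    by rewrite lebesgue_measure_itv /= lte_fin ltr01 ltry.
  - exact: Rmap_meas.
  - exists 1; split => // M M1 x _ /=.
    have /andP[h1 h2] := R_range x.
    rewrite ger0_norm //; lra.
exact h.
Qed.
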